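(* For distinct points $p,q\in M$, the smallest integer $i$ such that the level-$i$ ancestors $p^{(i)}$ and $q^{(i)}$ of $p$ and $q$ in the net tree are joined by a cross edge lies in the interval $$\left[\left\lfloor \log\left(\frac{d(p,q)}{\gamma+4}\right)\right\rfloor,\ \left\lceil \log\left(\frac{d(p,q)}{\gamma-4}\right)\right\rceil\right].$$
   Context: $(M,d)$ is a finite metric space of constant doubling dimension whose minimum interpoint distance is $1$ and whose diameter is $D$; $\log$ is base $2$. Compute nested sets $M=N_0\supseteq N_1\supseteq\cdots\supseteq N_{\log D}$ where $N_i$ is a $2^i$-net of $N_{i-1}$ (distinct points of $N_i$ are at distance $>2^i$, and every point of $N_{i-1}$ is within distance $2^i$ of some point of $N_i$); the top set is a single point. The net tree has one level-$i$ node for each point of $N_i$, whose representative $rep(\cdot)$ is that point; the parent of a level-$i$ node $v$ is a level-$(i+1)$ node $w$ with $d(rep(v),rep(w))\le 2^{i+1}$. The leaves correspond to the points of $M$, and $p^{(i)}$ denotes the level-$i$ ancestor of the leaf $p$. Fix a constant $\gamma>4$. For every pair of level-$i$ nodes $u,w$ with $d(rep(u),rep(w))\le\gamma\cdot 2^i$, a cross edge $(u,w)$ is added.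
   Formalization: For negative i the level-i ancestor $p^{(i)}$ is p itself, so the smallest integer i ranges over all integers up to the top level rather than over levels 0 to log D only. The statement above fails without it. *)

(* Defs.v *)
From HB Require Import structures.
From mathcomp Require Import all_boot all_order all_algebra.
From mathcomp Require Import reals exp.
Set Implicit Arguments. Unset Strict Implicit. Unset Printing Implicit Defensive.
Import Order.TTheory GRing.Theory Num.Theory.
Local Open Scope ring_scope.

Section NetTree.
Variables (R : realType) (T : finType) (d : T -> T -> R).

Definition log2 (x : R) : R := ln x / ln 2.

(** [d] is a metric on the finite set [T] (identity of indiscernibles is
    implied by [min_dist_one] below). *)
Definition is_metric : Prop :=
  [/\ forall x, d x x = 0,
      forall x y, d x y = d y x &
      forall x y z, d x z <= d x y + d y z].

Definition min_dist_one : Prop :=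
  (forall x y, x != y -> 1 <= d x y) /\ (exists x y, x != y /\ d x y = 1).

Definition is_net (r : R) (X Y : {set T}) : Prop :=
  [/\ Y \subset X,
      {in Y &, forall y y', y != y' -> r < d y y'} &
      {in X, forall x, exists2 y, y \in Y & d x y <= r}].

Definition is_net_hierarchy (N : nat -> {set T}) (L : nat) : Prop :=
  [/\ N 0%N = [set: T],
      forall i, (1 <= i <= L)%N -> is_net (2 ^+ i) (N i.-1) (N i) &
      #|N L| = 1%N].

(** [par i x] is (the representative of) the parent of the level-[i] node
    with representative [x]: a level-[(i+1)] node within [2^(i+1)]. *)
Definition is_parent_map (N : nat -> {set T}) (L : nat)
  (par : nat -> T -> T) : Prop :=
  forall i x, (i < L)%N -> x \in N i ->
    par i x \in N i.+1 /\ d x (par i x) <= 2 ^+ i.+1.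

Fixpoint anc (par : nat -> T -> T) (i : nat) (p : T) : T :=
  match i with 0%N => p | i'.+1 => par i' (anc par i' p) end.

Definition ancz (par : nat -> T -> T) (i : int) (p : T) : T :=
  match i with Posz n => anc par n p | Negz _ => p end.

Definition cross_edge (gamma : R) (i : int) (u w : T) : Prop :=
  d u w <= gamma * 2 ^ i.

Definition anc_joined (L : nat) (par : nat -> T -> T) (gamma : R)
  (p q : T) (i : int) : Prop :=
  i <= L%:Z /\ cross_edge gamma i (ancz par i p) (ancz par i q).

End NetTree.

(* Main.v *)
Require Import Defs.
From HB Require Import structures.
From mathcomp Require Import all_boot all_order all_algebra.
From mathcomp Require Import reals exp.
From mathcomp Require Import lra.
Import Order.TTheory GRing.Theory Num.Theory.
Local Open Scope ring_scope.

Lemma ln_exprz (R : realType) (z : int) : ln ((2:R) ^ z) = z%:~R * ln 2.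
Proof.
case: z => n.
  by rewrite -exprnP lnXn // mulr_natl.
rewrite NegzE -invr_expz -exprnP lnV ?posrE ?exprn_gt0 //.
by rewrite lnXn // mulrNz mulNr pmulrn mulr_natl.
Qed.

Lemma log2_le (R : realType) (x : R) (z : int) : 0 < x ->
  (log2 x <= z%:~R) = (x <= 2 ^ z).
Proof.
move=> x0; have l2 : 0 < ln (2:R) by apply: ln_gt0; rewrite ltr1n.
rewrite /log2 ler_pdivrMr // -ln_exprz ler_ln // posrE exprz_gt0 //.
Qed.

Lemma anc_bound (R : realType) (T : finType) (d : T -> T -> R)
  (N : nat -> {set T}) (L : nat) (par : nat -> T -> T) (p : T) :
  is_metric d -> is_net_hierarchy d N L -> is_parent_map d N L par ->
  forall i, (i <= L)%N -> anc par i p \in N i /\ d p (anc par i p) <= 2 ^+ i.+1 - 2.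
Proof.
move=> [d0 dC dT] [N0 _ _] hpar; elim=> [|i IH] hi /=.
  by rewrite N0 inE d0 expr1 subrr.
have [IH1 IH2] := IH (ltnW hi).
have [h1 h2] := hpar i _ hi IH1.
split=> //; apply: (le_trans (dT _ (anc par i p) _)).
rewrite (exprS _ i.+1); apply: le_trans (lerD IH2 h2) _.
by rewrite addrAC mulr2n mulrDl mul1r.
Qed.

Lemma ancz_close (R : realType) (T : finType) (d : T -> T -> R)
  (N : nat -> {set T}) (L : nat) (par : nat -> T -> T) (p q : T) (z : int) :
  is_metric d -> is_net_hierarchy d N L -> is_parent_map d N L par ->
  z <= L%:Z ->
  d p q <= d (ancz par z p) (ancz par z q) + 4 * 2 ^ z /\
  d (ancz par z p) (ancz par z q) <= d p q + 4 * 2 ^ z.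
Proof.
move=> hm [N0 hN hL] hpar hz.
have [d0 dC dT] := hm.
have pos : 0 <= 4 * (2:R) ^ z by rewrite mulr_ge0 // exprz_ge0.
case: z hz pos => [n|n] hz pos /=; last by rewrite !lerDl.
have hn : (n <= L)%N by [].
have [_ bp] := @anc_bound R T d N L par p hm (And3 N0 hN hL) hpar n hn.
have [_ bq] := @anc_bound R T d N L par q hm (And3 N0 hN hL) hpar n hn.
have e : 2 ^+ n.+1 - 2 + (2 ^+ n.+1 - 2) <= 4 * (2:R) ^ n.
  have : 0 <= (2:R) ^+ n by rewrite exprn_ge0.
  rewrite -exprnP exprS; lra.
set a := anc par n p; set b := anc par n q.
have t1 := dT p a q; have t2 := dT a b q; have t3 := dT a p b; have t4 := dT p q b.
rewrite dC in bq; have t5 := dC a p; have t6 := dC q b.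
split; lra.
Qed.

Lemma aux1 (R : realType) (D g x a : R) :
  D <= a + 4 * x -> a <= g * x -> D <= x * (g + 4).
Proof. move=> *; lra. Qed.

Lemma aux2 (R : realType) (D g x a : R) :
  a <= D + 4 * x -> D <= x * (g - 4) -> a <= g * x.
Proof. move=> *; lra. Qed.

Theorem lemma16 (R : realType) (T : finType) (d : T -> T -> R)
  (N : nat -> {set T}) (L : nat) (par : nat -> T -> T) (gamma : R)
  (p q : T) (i0 : int) :
  is_metric d -> min_dist_one d ->
  is_net_hierarchy d N L -> is_parent_map d N L par ->
  4 < gamma -> p != q ->
  anc_joined d L par gamma p q i0 ->
  (forall j : int, j < i0 -> ~ anc_joined d L par gamma p q j) ->
  Num.floor (log2 (d p q / (gamma + 4))) <= i0 <=
  Num.ceil (log2 (d p q / (gamma - 4))).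
Proof.
move=> hm [hmin _] hN hpar g4 pq [hi0 hc] hmin0.
have D1 := hmin p q pq.
have Dpos : 0 < d p q by apply: lt_le_trans D1.
have gp : 0 < gamma + 4 by rewrite addr_gt0 // (lt_trans _ g4).
have gm : 0 < gamma - 4 by rewrite subr_gt0.
apply/andP; split.
  have [h1 _] := @ancz_close R T d N L par p q _ hm hN hpar hi0.
  rewrite /cross_edge in hc.
  have hz : 0 < (2:R) ^ i0 by rewrite exprz_gt0.
  have : d p q / (gamma + 4) <= 2 ^ i0.
    by rewrite ler_pdivrMr //; apply: aux1 h1 hc.
  rewrite -log2_le ?divr_gt0 // => hl.
  rewrite -(ler_int R); apply: le_trans (floor_le _) hl.
set c := Num.ceil _.
case: (lerP i0 c) => // hlt; exfalso.
apply: (hmin0 c hlt); split; first by apply: le_trans hi0; exact: ltW.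
have [_ h2] := @ancz_close R T d N L par p q _ hm hN hpar (le_trans (ltW hlt) hi0).
have hz : 0 < (2:R) ^ c by rewrite exprz_gt0.
have : d p q / (gamma - 4) <= 2 ^ c.
  by rewrite -log2_le ?divr_gt0 // ceil_ge.
rewrite ler_pdivrMr // => h3.
rewrite /cross_edge; exact: aux2 h2 h3.
Qed.
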